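(* In the multi-agent combinatorial-actions contract model (described in the context), suppose the reward function $f$ is submodular. Let $\boldsymbol{\alpha}\in\mathbb{R}_{\ge0}^A$ be a contract and let $S\subseteq T$ be subset-stable with respect to $\boldsymbol{\alpha}$, such that $S\cap T_i=\emptyset$ for every agent $i$ with $\alpha_i=0$. Then every pure Nash equilibrium $S^\dagger$ with respect to the contract $2\boldsymbol{\alpha}$ satisfies $f(S^\dagger)\ge\frac12f(S)$.
   Context: Model: principal and agents $A=[n]$; each agent $i$ has a finite action set $T_i$ (pairwise disjoint), $T=\bigsqcup_iT_i$, costs $c_j\ge0$, $c(S_i)=\sum_{j\in S_i}c_j$. Reward $f:2^T\to[0,1]$ monotone, $f(\emptyset)=0$; submodular means $f(S'\cup\{a\})-f(S')\ge f(S\cup\{a\})-f(S)$ for $S'\subseteq S$, $a\notin S$. For a profile $S\subseteq T$ write $S_i=S\cap T_i$, $S_{-i}=S\setminus S_i$. Under a contract $\boldsymbol{\alpha}$ agent $i$'s utility is $\alpha_if(S)-c(S_i)$; $S$ is a pure Nash equilibrium of $\boldsymbol{\alpha}$ if for every $i$ and every $S'_i\subseteq T_i$, $\alpha_if(S_i\sqcup S_{-i})-c(S_i)\ge\alpha_if(S'_i\sqcup S_{-i})-c(S'_i)$. $S$ is subset-stable with respect to $\boldsymbol{\alpha}$ if the same inequality holds for every $i$ and every $S'_i\subseteq S_i$. *)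

(* Defs.v *)
From mathcomp Require Import all_boot all_order all_algebra.
Set Implicit Arguments. Unset Strict Implicit. Unset Printing Implicit Defensive.
Import Order.TTheory GRing.Theory Num.Theory.
Local Open Scope ring_scope.

(* Model: agents 'I_n; actions form a finite type T; [own a] is the agent
   owning action a, so T_i = [set a | own a == i] (pairwise disjoint,
   T = disjoint union of the T_i). Profiles are subsets S : {set T}. *)

Section Model.
Variables (R : realFieldType) (n : nat) (T : finType) (own : T -> 'I_n).

Definition Tset (i : 'I_n) : {set T} := [set a | own a == i].
Definition part (S : {set T}) (i : 'I_n) : {set T} := S :&: Tset i.
Definition others (S : {set T}) (i : 'I_n) : {set T} := S :\: Tset i.

Definition cost (c : T -> R) (X : {set T}) : R := \sum_(a in X) c a.

Definition monotone_set_fun (f : {set T} -> R) : Prop :=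
  forall S S' : {set T}, S \subset S' -> f S <= f S'.

Definition submodular (f : {set T} -> R) : Prop :=
  forall (S' S : {set T}) (a : T), S' \subset S -> a \notin S ->
    f (a |: S') - f S' >= f (a |: S) - f S.

Definition utility (alpha : 'I_n -> R) (c : T -> R) (f : {set T} -> R)
  (i : 'I_n) (X : {set T}) : R := alpha i * f X - cost c (part X i).

Definition pure_NE (alpha : 'I_n -> R) (c : T -> R) (f : {set T} -> R)
  (S : {set T}) : Prop :=
  forall (i : 'I_n) (Si' : {set T}), Si' \subset Tset i ->
    alpha i * f (part S i :|: others S i) - cost c (part S i)
      >= alpha i * f (Si' :|: others S i) - cost c Si'.

Definition subset_stable (alpha : 'I_n -> R) (c : T -> R) (f : {set T} -> R)
  (S : {set T}) : Prop :=
  forall (i : 'I_n) (Si' : {set T}), Si' \subset part S i ->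
    alpha i * f (part S i :|: others S i) - cost c (part S i)
      >= alpha i * f (Si' :|: others S i) - cost c Si'.

End Model.

(* Main.v *)
Require Import Defs.
From mathcomp Require Import all_boot all_order all_algebra.
From mathcomp Require Import lra.
Import Order.TTheory GRing.Theory Num.Theory.
Local Open Scope ring_scope.

Section Aux.
Variables (R : realFieldType) (T : finType) (f : {set T} -> R).
Hypothesis mono : monotone_set_fun f.
Hypothesis subm : submodular f.

Lemma subA (X Y Z : {set T}) : X \subset Y ->
  f (Y :|: Z) - f Y <= f (X :|: Z) - f X.
Proof.
move=> XY; have [k Hk] : exists k, (#|Z| <= k)%N by exists #|Z|.
elim: k Z Hk => [|k IH] Z Hk.
  have -> : Z = set0 by apply: cards0_eq; move: Hk; rewrite leqn0 => /eqP.
  by rewrite !setU0 !subrr.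
case: (set_0Vmem Z) => [->|[a aZ]]; first by rewrite !setU0 !subrr.
set Z' := Z :\ a.
have HZ' : (#|Z'| <= k)%N by move: Hk; rewrite (cardsD1 a Z) aZ.
have IH' := IH Z' HZ'.
rewrite -(setD1K aZ) -/Z' (setUCA X) (setUCA Y).
have mX : f (X :|: Z') <= f (a |: (X :|: Z')) by apply: mono; apply: subsetUr.
case: (boolP (a \in Y :|: Z')) => aY.
  have -> : a |: (Y :|: Z') = Y :|: Z'.
    by apply/setUidPr; rewrite sub1set.
  lra.
have aX : a \notin X :|: Z'.
  apply: contra aY; apply/subsetP; exact: setSU.
have := subm (X :|: Z') (Y :|: Z') a (setSU Z' XY) aY; lra.
Qed.

Lemma L1 (I : finType) (X : {set T}) (G : I -> {set T}) (P : {set I}) :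
  f (X :|: \bigcup_(i in P) G i) - f X <= \sum_(i in P) (f (X :|: G i) - f X).
Proof.
have [k Hk] : exists k, (#|P| <= k)%N by exists #|P|.
elim: k P Hk => [|k IH] P Hk.
  have -> : P = set0 by apply: cards0_eq; move: Hk; rewrite leqn0 => /eqP.
  by rewrite !big_set0 setU0 subrr.
case: (set_0Vmem P) => [->|[i iP]]; first by rewrite !big_set0 setU0 subrr.
have HP' : (#|P :\ i| <= k)%N by move: Hk; rewrite (cardsD1 i P) iP.
have IH' := IH _ HP'.
rewrite [\bigcup_(j in P) _](big_setD1 i) // [\sum_(j in P) _](big_setD1 i) //=.
have := subA _ _ (G i) (subsetUl X (\bigcup_(j in P :\ i) G j)).
rewrite setUCA [G i :|: _]setUC.
lra.
Qed.

Lemma L2 (I : finType) (Y : {set T}) (G : I -> {set T}) (P : {set I}) :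
  (forall i, G i \subset Y) ->
  (forall i j, i != j -> [disjoint G i & G j]) ->
  \sum_(i in P) (f Y - f (Y :\: G i)) <= f Y - f (Y :\: \bigcup_(i in P) G i).
Proof.
move=> HG Hd.
have [k Hk] : exists k, (#|P| <= k)%N by exists #|P|.
elim: k P Hk => [|k IH] P Hk.
  have -> : P = set0 by apply: cards0_eq; move: Hk; rewrite leqn0 => /eqP.
  by rewrite !big_set0 setD0 subrr.
case: (set_0Vmem P) => [->|[i iP]]; first by rewrite !big_set0 setD0 subrr.
have HP' : (#|P :\ i| <= k)%N by move: Hk; rewrite (cardsD1 i P) iP.
have IH' := IH _ HP'.
rewrite [\bigcup_(j in P) _](big_setD1 i) // [\sum_(j in P) _](big_setD1 i) //=.
set U := \bigcup_(j in P :\ i) G j in IH' *.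
have dis : [disjoint G i & U].
  apply: bigcup_disjoint => j; rewrite !inE => /andP[ji _].
  by apply: Hd; rewrite eq_sym.
have XY : Y :\: (G i :|: U) \subset Y :\: G i.
  by apply: setDS; apply: subsetUl.
have := subA _ _ (G i) XY.
have -> : Y :\: G i :|: G i = Y.
  apply/setP => a; rewrite !inE; case: (boolP (a \in G i)) => ha /=; last by rewrite orbF.
  by rewrite (subsetP (HG i) _ ha).
have -> : Y :\: (G i :|: U) :|: G i = Y :\: U.
  apply/setP => a; rewrite !inE; case: (boolP (a \in G i)) => ha /=.
    rewrite (subsetP (HG i) _ ha).
    by rewrite (disjointFr dis ha).
  by rewrite orbF.
lra.
Qed.

End Aux.

Lemma cost_split (R : realFieldType) (T : finType) (c : T -> R) (A B : {set T}) :
  cost c A = cost c (A :&: B) + cost c (A :\: B).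
Proof. by rewrite /cost (big_setID B). Qed.

Theorem lemma2p3 (R : realFieldType) (n : nat) (T : finType) (own : T -> 'I_n)
  (c : T -> R) (f : {set T} -> R) (alpha : 'I_n -> R) (S Sd : {set T}) :
  (forall a, 0 <= c a) ->
  f set0 = 0 ->
  (forall X, 0 <= f X <= 1) ->
  monotone_set_fun f ->
  submodular f ->
  (forall i, 0 <= alpha i) ->
  subset_stable own alpha c f S ->
  (forall i, alpha i = 0 -> part own S i = set0) ->
  pure_NE own (fun i => 2 * alpha i) c f Sd ->
  f Sd >= f S / 2.
Proof.
move=> c0 f0 f01 mono subm a0 SS Z NE.
pose D := fun i => part own S i :\: Sd.
have key : forall i, 2 * (f (Sd :|: part own S i) - f Sd) <= f S - f (S :\: D i).
  move=> i.
  have := a0 i; rewrite le0r => /orP[/eqP ai0|aipos].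
    rewrite /D (Z i ai0) set0D setU0 setD0; lra.
  have hsub : part own Sd i :|: part own S i \subset Tset own i.
    by rewrite subUset !subsetIr.
  have hNE := NE i _ hsub.
  have hSS := SS i (part own S i :&: Sd) (subsetIl _ _).
  rewrite /part /others setID in hNE.
  rewrite setID in hSS.
  have e2 : (Sd :&: Tset own i :|: S :&: Tset own i) :|: Sd :\: Tset own i
       = Sd :|: S :&: Tset own i.
    apply/setP => a; rewrite /Tset !inE.
    by case: (a \in Sd); case: (a \in S); case: (own a == i).
  have e3 : (S :&: Tset own i :&: Sd) :|: S :\: Tset own i = S :\: D i.
    apply/setP => a; rewrite /D /part /Tset !inE.
    by case: (a \in Sd); case: (a \in S); case: (own a == i).
  rewrite e2 in hNE; rewrite e3 in hSS.
  have c1 := cost_split _ _ c (Sd :&: Tset own i :|: S :&: Tset own i) (Sd :&: Tset own i).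
  have e4 : (Sd :&: Tset own i :|: S :&: Tset own i) :&: (Sd :&: Tset own i)
       = Sd :&: Tset own i.
    apply/setP => a; rewrite /Tset !inE.
    by case: (a \in Sd); case: (a \in S); case: (own a == i).
  have e5 : (Sd :&: Tset own i :|: S :&: Tset own i) :\: (Sd :&: Tset own i)
       = D i.
    apply/setP => a; rewrite /D /part /Tset !inE.
    by case: (a \in Sd); case: (a \in S); case: (own a == i).
  rewrite e4 e5 in c1.
  have c2 := cost_split _ _ c (S :&: Tset own i) Sd.
  rewrite -/(part own S i) -/(D i) in c2.
  rewrite -/(part own S i) in hNE hSS.
  have h : alpha i * (2 * (f (Sd :|: part own S i) - f Sd))
           <= alpha i * (f S - f (S :\: D i)) by nra.
  by rewrite ler_pM2l in h.
have L : \sum_(i in [set: 'I_n]) 2 * (f (Sd :|: part own S i) - f Sd)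
    <= \sum_(i in [set: 'I_n]) (f S - f (S :\: D i)).
  by apply: ler_sum => i _; exact: key i.
rewrite -mulr_sumr in L.
have L1' := @L1 _ _ f mono subm _ Sd (part own S) [set: 'I_n].
have Hdis : forall i j, i != j -> [disjoint D i & D j].
  move=> i j ij; rewrite -setI_eq0; apply/eqP/setP => a.
  rewrite /D /part /Tset !inE; apply/negbTE/negP.
  move=> /andP[/andP[_ /andP[_ /eqP ei]] /andP[_ /andP[_ /eqP ej]]].
  by move: ij; rewrite -ei -ej eqxx.
have HG : forall i, D i \subset S.
  by move=> i; rewrite /D /part; apply: subset_trans (subsetDl _ _) (subsetIl _ _).
have L2' := @L2 _ _ f mono subm _ S D [set: 'I_n] HG Hdis.
have Hm : f S <= f (Sd :|: \bigcup_(i in [set: 'I_n]) part own S i).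
  apply: mono; apply/subsetP => a aS; rewrite inE; apply/orP; right.
  by apply/bigcupP; exists (own a); rewrite // /part /Tset !inE aS eqxx.
have /andP[h1 _] := f01 (S :\: \bigcup_(i in [set: 'I_n]) D i).
move: L L1' L2' Hm h1; rewrite -/(D _).
set x1 := \sum_(i in _) (f (Sd :|: _) - f Sd).
set x2 := \sum_(i in _) (f S - f (S :\: D _)).
set y1 := f (Sd :|: _).
set y2 := f (S :\: _).
clear; move=> *; lra.
Qed.
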